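(* Let $a\neq 0$ be a real constant and consider the Hirota–Ramani equation $$u_t-u_{xxt}+a\,u_x(1-u_t)=0$$ for a scalar function $u(x,t)$. A vector field $\mathbf v=\xi(x,t,u)\partial_x+\eta(x,t,u)\partial_t+\varphi(x,t,u)\partial_u$ is an infinitesimal (classical, Lie point) symmetry of this equation if and only if $$\xi=-\tfrac{x}{3}c_1+c_3,\qquad \eta=c_1t+c_2,\qquad \varphi=\Big(\tfrac{2t}{3}+\tfrac{u}{3}-\tfrac{2x}{3a}\Big)c_1+c_4$$ for arbitrary constants $c_1,c_2,c_3,c_4$. Consequently the Lie algebra of infinitesimal point symmetries of the equation is spanned by $$\mathbf v_1=\partial_x,\quad \mathbf v_2=\partial_t,\quad \mathbf v_3=\tfrac1a\partial_u,\quad \mathbf v_4=3t\partial_t-x\partial_x+\Big(2t+u-\tfrac{2x}{a}\Big)\partial_u .$$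
   Context: A vector field $\mathbf v$ on the space of variables $(x,t,u)$ is an infinitesimal symmetry of the equation $\Delta=u_t-u_{xxt}+a u_x(1-u_t)=0$ if its third prolongation $\mathrm{Pr}^{(3)}\mathbf v$ satisfies $\mathrm{Pr}^{(3)}\mathbf v[\Delta]=0$ whenever $\Delta=0$, i.e. the local one-parameter group it generates maps solutions to solutions. *)

(* Defs.v *)
From Stdlib Require Import Reals.
From Coquelicot Require Import Coquelicot.
Open Scope R_scope.

Definition dx2 (f : R -> R -> R) : R -> R -> R :=
  fun x t => Derive (fun y => f y t) x.
Definition dt2 (f : R -> R -> R) : R -> R -> R :=
  fun x t => Derive (fun s => f x s) t.

Fixpoint Ck2 (k : nat) (f : R -> R -> R) : Prop :=
  match k with
  | O => forall x t, continuous (fun p : R * R => f (fst p) (snd p)) (x, t)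
  | S k' =>
      (forall x t, continuous (fun p : R * R => f (fst p) (snd p)) (x, t)) /\
      (forall x t, ex_derive (fun y => f y t) x /\ ex_derive (fun s => f x s) t) /\
      Ck2 k' (dx2 f) /\ Ck2 k' (dt2 f)
  end.
Definition smooth2 (f : R -> R -> R) : Prop := forall k, Ck2 k f.

Definition d1 (f : R -> R -> R -> R) : R -> R -> R -> R :=
  fun x t u => Derive (fun y => f y t u) x.
Definition d2 (f : R -> R -> R -> R) : R -> R -> R -> R :=
  fun x t u => Derive (fun s => f x s u) t.
Definition d3 (f : R -> R -> R -> R) : R -> R -> R -> R :=
  fun x t u => Derive (fun w => f x t w) u.

Fixpoint Ck3 (k : nat) (f : R -> R -> R -> R) : Prop :=
  match k with
  | O => forall x t u,
      continuous (fun p : R * R * R => f (fst (fst p)) (snd (fst p)) (snd p)) (x, t, u)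
  | S k' =>
      (forall x t u,
        continuous (fun p : R * R * R => f (fst (fst p)) (snd (fst p)) (snd p)) (x, t, u)) /\
      (forall x t u, ex_derive (fun y => f y t u) x /\
                     ex_derive (fun s => f x s u) t /\
                     ex_derive (fun w => f x t w) u) /\
      Ck3 k' (d1 f) /\ Ck3 k' (d2 f) /\ Ck3 k' (d3 f)
  end.
Definition smooth3 (f : R -> R -> R -> R) : Prop := forall k, Ck3 k f.

(* A jet point over (x,t) is J : nat -> nat -> R, J i j = u_{x^i t^j};
   J 0 0 is the dependent variable u itself. *)
Definition jet2 (u : R -> R -> R) (x t : R) : nat -> nat -> R :=
  fun i j => Nat.iter i dx2 (Nat.iter j dt2 u) x t.

Definition difffun := R -> R -> (nat -> nat -> R) -> R.

Definition updJ (J : nat -> nat -> R) (i j : nat) (s : R) : nat -> nat -> R :=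
  fun k l => if andb (Nat.eqb k i) (Nat.eqb l j) then s else J k l.

Definition dJ (F : difffun) (x t : R) (J : nat -> nat -> R) (i j : nat) : R :=
  Derive (fun s => F x t (updJ J i j s)) (J i j).

Definition charQ (xi eta phi : R -> R -> R -> R) (u : R -> R -> R) : R -> R -> R :=
  fun x t => phi x t (u x t) - xi x t (u x t) * dx2 u x t
             - eta x t (u x t) * dt2 u x t.

(* prolongation coefficient phi^J = D_J Q + xi u_{J,x} + eta u_{J,t},
   J = x^i t^j, evaluated on the prolonged graph of u at (x,t)
   (total derivatives of Q along u are the ordinary partial derivatives of
   the composite function charQ). phi^{(0,0)} = phi. *)
Definition prol_coef (xi eta phi : R -> R -> R -> R) (u : R -> R -> R)
  (i j : nat) (x t : R) : R :=
  Nat.iter i dx2 (Nat.iter j dt2 (charQ xi eta phi u)) x t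
  + xi x t (u x t) * jet2 u x t (S i) j
  + eta x t (u x t) * jet2 u x t i (S j).

Definition prolong3 (xi eta phi : R -> R -> R -> R) (F : difffun)
  (u : R -> R -> R) (x t : R) : R :=
  let J := jet2 u x t in
  xi x t (u x t) * Derive (fun y => F y t J) x
  + eta x t (u x t) * Derive (fun s => F x s J) t
  + sum_n (fun i => sum_n (fun j =>
        if Nat.leb (i + j) 3 then prol_coef xi eta phi u i j x t * dJ F x t J i j
        else 0) 3) 3.

(* infinitesimal symmetry of a third-order equation F = 0:
   Pr^(3) v [F] = 0 whenever F = 0 (on jet space; every 3-jet is realized
   by a smooth (polynomial) function u). *)
Definition is_symmetry3 (F : difffun) (xi eta phi : R -> R -> R -> R) : Prop :=
  forall u : R -> R -> R, smooth2 u ->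
  forall x t : R, F x t (jet2 u x t) = 0 -> prolong3 xi eta phi F u x t = 0.

Definition HR (a : R) : difffun :=
  fun x t J => J 0%nat 1%nat - J 2%nat 1%nat + a * J 1%nat 0%nat * (1 - J 0%nat 1%nat).

Definition vfield := ((R -> R -> R -> R) * (R -> R -> R -> R) * (R -> R -> R -> R))%type.
Definition v1 : vfield := (fun _ _ _ => 1, fun _ _ _ => 0, fun _ _ _ => 0).
Definition v2 : vfield := (fun _ _ _ => 0, fun _ _ _ => 1, fun _ _ _ => 0).
Definition v3 (a : R) : vfield := (fun _ _ _ => 0, fun _ _ _ => 0, fun _ _ _ => 1 / a).
Definition v4 (a : R) : vfield :=
  (fun x _ _ => - x, fun _ t _ => 3 * t, fun x t u => 2 * t + u - 2 * x / a).
Definition vxi (v : vfield) := fst (fst v).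
Definition veta (v : vfield) := snd (fst v).
Definition vphi (v : vfield) := snd v.

(* Main.v *)
Require Import Defs.
From Stdlib Require Import Reals.
From Coquelicot Require Import Coquelicot.
Open Scope R_scope.
From Stdlib Require Import Lra FunctionalExtensionality.
Require Import Defs.


Definition Fadd (F G : R -> R -> R) : R -> R -> R := fun x t => F x t + G x t.
Definition Fsub (F G : R -> R -> R) : R -> R -> R := fun x t => F x t - G x t.
Definition Fmul (F G : R -> R -> R) : R -> R -> R := fun x t => F x t * G x t.
Definition Fcst (c : R) : R -> R -> R := fun _ _ => c.
Definition Fcomp (g : R -> R -> R -> R) (u : R -> R -> R) : R -> R -> R :=
  fun x t => g x t (u x t).

Definition cont2 (f : R -> R -> R) := forall x t,
  continuous (fun p : R * R => f (fst p) (snd p)) (x, t).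
Definition exd2 (f : R -> R -> R) := forall x t,
  ex_derive (fun y => f y t) x /\ ex_derive (fun s => f x s) t.

Lemma Ck2_cont k f : Ck2 k f -> cont2 f.
Proof. destruct k; simpl; [auto| intros [H _]; exact H]. Qed.
Lemma Ck2_exd k f : Ck2 (S k) f -> exd2 f.
Proof. simpl. intros [_ [H _]]. exact H. Qed.
Lemma Ck2_dx k f : Ck2 (S k) f -> Ck2 k (dx2 f).
Proof. simpl. tauto. Qed.
Lemma Ck2_dt k f : Ck2 (S k) f -> Ck2 k (dt2 f).
Proof. simpl. tauto. Qed.
Lemma Ck2_S k : forall f, Ck2 (S k) f -> Ck2 k f.
Proof.
  induction k; intros f H.
  - exact (Ck2_cont _ _ H).
  - destruct H as [H1 [H2 [H3 H4]]].
    split; [exact H1|]. split; [exact H2|].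
    split; apply IHk; assumption.
Qed.

Lemma cont2_add F G : cont2 F -> cont2 G -> cont2 (Fadd F G).
Proof. intros HF HG x t. apply (continuous_plus (fun p : R*R => F (fst p) (snd p)) (fun p : R*R => G (fst p) (snd p))); auto. Qed.
Lemma cont2_sub F G : cont2 F -> cont2 G -> cont2 (Fsub F G).
Proof. intros HF HG x t. apply (continuous_minus (fun p : R*R => F (fst p) (snd p)) (fun p : R*R => G (fst p) (snd p))); auto. Qed.
Lemma cont2_mul F G : cont2 F -> cont2 G -> cont2 (Fmul F G).
Proof. intros HF HG x t. apply (continuous_mult (fun p : R*R => F (fst p) (snd p)) (fun p : R*R => G (fst p) (snd p))); auto. Qed.
Lemma cont2_cst c : cont2 (Fcst c).
Proof. intros x t. apply continuous_const. Qed.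

Lemma exd2_add F G : exd2 F -> exd2 G -> exd2 (Fadd F G).
Proof. intros HF HG x t; destruct (HF x t) as [F1 F2]; destruct (HG x t) as [G1 G2]; split; unfold Fadd.
  - exact (ex_derive_plus (fun y => F y t) (fun y => G y t) x F1 G1).
  - exact (ex_derive_plus (fun y => F x y) (fun y => G x y) t F2 G2).
Qed.
Lemma exd2_sub F G : exd2 F -> exd2 G -> exd2 (Fsub F G).
Proof. intros HF HG x t; destruct (HF x t) as [F1 F2]; destruct (HG x t) as [G1 G2]; split; unfold Fsub.
  - exact (ex_derive_minus (fun y => F y t) (fun y => G y t) x F1 G1).
  - exact (ex_derive_minus (fun y => F x y) (fun y => G x y) t F2 G2).
Qed.
Lemma exd2_mul F G : exd2 F -> exd2 G -> exd2 (Fmul F G).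
Proof. intros HF HG x t; destruct (HF x t) as [F1 F2]; destruct (HG x t) as [G1 G2]; split; unfold Fmul.
  - exact (ex_derive_mult (fun y => F y t) (fun y => G y t) x F1 G1).
  - exact (ex_derive_mult (fun y => F x y) (fun y => G x y) t F2 G2).
Qed.

Lemma dx2_add F G : exd2 F -> exd2 G -> dx2 (Fadd F G) = Fadd (dx2 F) (dx2 G).
Proof. intros HF HG. unfold dx2, Fadd. apply functional_extensionality; intro x;
  apply functional_extensionality; intro t.
  apply (Derive_plus (fun y => F y t) (fun y => G y t)); [exact (proj1 (HF x t))|exact (proj1 (HG x t))]. Qed.
Lemma dt2_add F G : exd2 F -> exd2 G -> dt2 (Fadd F G) = Fadd (dt2 F) (dt2 G).
Proof. intros HF HG. unfold dt2, Fadd. apply functional_extensionality; intro x;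
  apply functional_extensionality; intro t.
  apply (Derive_plus (fun y => F x y) (fun y => G x y)); [exact (proj2 (HF x t))|exact (proj2 (HG x t))]. Qed.
Lemma dx2_sub F G : exd2 F -> exd2 G -> dx2 (Fsub F G) = Fsub (dx2 F) (dx2 G).
Proof. intros HF HG. unfold dx2, Fsub. apply functional_extensionality; intro x;
  apply functional_extensionality; intro t.
  apply (Derive_minus (fun y => F y t) (fun y => G y t)); [exact (proj1 (HF x t))|exact (proj1 (HG x t))]. Qed.
Lemma dt2_sub F G : exd2 F -> exd2 G -> dt2 (Fsub F G) = Fsub (dt2 F) (dt2 G).
Proof. intros HF HG. unfold dt2, Fsub. apply functional_extensionality; intro x;
  apply functional_extensionality; intro t.
  apply (Derive_minus (fun y => F x y) (fun y => G x y)); [exact (proj2 (HF x t))|exact (proj2 (HG x t))]. Qed.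
Lemma dx2_mul F G : exd2 F -> exd2 G ->
  dx2 (Fmul F G) = Fadd (Fmul (dx2 F) G) (Fmul F (dx2 G)).
Proof. intros HF HG. unfold dx2, Fmul, Fadd. apply functional_extensionality; intro x;
  apply functional_extensionality; intro t.
  apply (Derive_mult (fun y => F y t) (fun y => G y t)); [exact (proj1 (HF x t))|exact (proj1 (HG x t))]. Qed.
Lemma dt2_mul F G : exd2 F -> exd2 G ->
  dt2 (Fmul F G) = Fadd (Fmul (dt2 F) G) (Fmul F (dt2 G)).
Proof. intros HF HG. unfold dt2, Fmul, Fadd. apply functional_extensionality; intro x;
  apply functional_extensionality; intro t.
  apply (Derive_mult (fun y => F x y) (fun y => G x y)); [exact (proj2 (HF x t))|exact (proj2 (HG x t))]. Qed.
Lemma dx2_cst c : dx2 (Fcst c) = Fcst 0.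
Proof. unfold dx2, Fcst. apply functional_extensionality; intro x;
  apply functional_extensionality; intro t. apply Derive_const. Qed.
Lemma dt2_cst c : dt2 (Fcst c) = Fcst 0.
Proof. unfold dt2, Fcst. apply functional_extensionality; intro x;
  apply functional_extensionality; intro t. apply Derive_const. Qed.

Lemma Ck2_add k : forall F G, Ck2 k F -> Ck2 k G -> Ck2 k (Fadd F G).
Proof.
  induction k; intros F G HF HG.
  - apply cont2_add; [apply (Ck2_cont 0)|apply (Ck2_cont 0)]; auto.
  - split; [apply cont2_add; eapply Ck2_cont; eauto|].
    split; [apply exd2_add; eapply Ck2_exd; eauto|].
    rewrite dx2_add, dt2_add by (eapply Ck2_exd; eauto).
    split; apply IHk; first [apply Ck2_dx | apply Ck2_dt]; auto.
Qed.
Lemma Ck2_sub k : forall F G, Ck2 k F -> Ck2 k G -> Ck2 k (Fsub F G).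
Proof.
  induction k; intros F G HF HG.
  - apply cont2_sub; [apply (Ck2_cont 0)|apply (Ck2_cont 0)]; auto.
  - split; [apply cont2_sub; eapply Ck2_cont; eauto|].
    split; [apply exd2_sub; eapply Ck2_exd; eauto|].
    rewrite dx2_sub, dt2_sub by (eapply Ck2_exd; eauto).
    split; apply IHk; first [apply Ck2_dx | apply Ck2_dt]; auto.
Qed.
Lemma Ck2_mul k : forall F G, Ck2 k F -> Ck2 k G -> Ck2 k (Fmul F G).
Proof.
  induction k; intros F G HF HG.
  - apply cont2_mul; [apply (Ck2_cont 0)|apply (Ck2_cont 0)]; auto.
  - split; [apply cont2_mul; eapply Ck2_cont; eauto|].
    split; [apply exd2_mul; eapply Ck2_exd; eauto|].
    rewrite dx2_mul, dt2_mul by (eapply Ck2_exd; eauto).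
    split; apply Ck2_add; apply IHk;
      first [apply Ck2_dx; assumption | apply Ck2_dt; assumption | apply Ck2_S; assumption].
Qed.
Lemma Ck2_cst k : forall c, Ck2 k (Fcst c).
Proof.
  induction k; intro c.
  - apply cont2_cst.
  - split; [apply cont2_cst|]. split.
    + intros x t; split; unfold Fcst; apply ex_derive_const.
    + rewrite dx2_cst, dt2_cst. auto.
Qed.
Lemma chain2 (h : R -> R -> R) (w : R -> R) y0 dw :
  (forall a b, ex_derive (fun z => h z b) a) ->
  ex_derive (fun z => h y0 z) (w y0) ->
  continuous (fun p : R*R => Derive (fun z => h z (snd p)) (fst p)) (y0, w y0) ->
  is_derive w y0 dw ->
  is_derive (fun y => h y (w y)) y0
    (Derive (fun z => h z (w y0)) y0 + Derive (fun z => h y0 z) (w y0) * dw).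
Proof.
  intros Hx Hy Hc Hw.
  unfold is_derive.
  eapply filterdiff_ext_lin.
  - apply (filterdiff_comp'_2 (fun y : R => y) w h y0 (fun y => y) (fun y => scal y dw)
       (fun a b => plus (scal a (Derive (fun z => h z (w y0)) y0))
                        (scal b (Derive (fun z => h y0 z) (w y0))))).
    + apply filterdiff_id.
    + exact Hw.
    + apply is_derive_filterdiff with (dfx := fun a b => Derive (fun z => h z b) a).
      * apply filter_forall. intros [a b]. simpl. apply Derive_correct. apply Hx.
      * apply Derive_correct. apply Hy.
      * exact Hc.
  - intros y. simpl. unfold scal, plus; simpl. unfold mult; simpl. ring.
Qed.
Lemma continuous_pair {U V W : UniformSpace} (f : U -> V) (g : U -> W) x :
  continuous f x -> continuous g x -> continuous (fun y => (f y, g y)) x.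
Proof.
  intros Hf Hg.
  apply (continuous_comp_2 f g (fun a b => (a, b))); auto.
  apply continuous_ext with (f := fun p => p).
  - intros [a b]; reflexivity.
  - apply continuous_id.
Qed.

Definition cont3 (f : R -> R -> R -> R) : Prop := forall x t u,
  continuous (fun p : R * R * R => f (fst (fst p)) (snd (fst p)) (snd p)) (x, t, u).

Lemma cont3_slice_t (f : R->R->R->R) t y w : cont3 f ->
  continuous (fun p : R*R => f (fst p) t (snd p)) (y, w).
Proof.
  intros H.
  apply (continuous_comp (fun p : R*R => ((fst p, t), snd p))
            (fun q : R*R*R => f (fst (fst q)) (snd (fst q)) (snd q))).
  - apply continuous_pair; [apply continuous_pair|].
    + apply continuous_fst.
    + apply continuous_const.
    + apply continuous_snd.
  - apply H.
Qed.

Lemma cont3_slice_x (f : R->R->R->R) x s w : cont3 f ->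
  continuous (fun p : R*R => f x (fst p) (snd p)) (s, w).
Proof.
  intros H.
  apply (continuous_comp (fun p : R*R => ((x, fst p), snd p))
            (fun q : R*R*R => f (fst (fst q)) (snd (fst q)) (snd q))).
  - apply continuous_pair; [apply continuous_pair|].
    + apply continuous_const.
    + apply continuous_fst.
    + apply continuous_snd.
  - apply H.
Qed.

Lemma cont3_slice_u (f : R->R->R->R) u x t : cont3 f ->
  continuous (fun p : R*R => f (fst p) (snd p) u) (x, t).
Proof.
  intros H.
  apply (continuous_comp (fun p : R*R => ((fst p, snd p), u))
            (fun q : R*R*R => f (fst (fst q)) (snd (fst q)) (snd q))).
  - apply continuous_pair; [apply continuous_pair|].
    + apply continuous_fst.
    + apply continuous_snd.
    + apply continuous_const.
  - apply H.
Qed.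

Lemma cont3_comp (f : R->R->R->R) (u : R -> R -> R) x t : cont3 f ->
  continuous (fun p : R*R => u (fst p) (snd p)) (x, t) ->
  continuous (fun p : R*R => f (fst p) (snd p) (u (fst p) (snd p))) (x, t).
Proof.
  intros H Hu.
  apply (continuous_comp (fun p : R*R => ((fst p, snd p), u (fst p) (snd p)))
            (fun q : R*R*R => f (fst (fst q)) (snd (fst q)) (snd q))).
  - apply continuous_pair; [apply continuous_pair|].
    + apply continuous_fst.
    + apply continuous_snd.
    + exact Hu.
  - apply H.
Qed.


Lemma Ck3_cont k g : Ck3 k g -> cont3 g.
Proof. destruct k; simpl; [auto| intros [H _]; exact H]. Qed.
Lemma Ck3_exd k g : Ck3 (S k) g -> forall x t u,
  ex_derive (fun y => g y t u) x /\ ex_derive (fun s => g x s u) t /\ ex_derive (fun w => g x t w) u.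
Proof. intros [_ [H _]]. exact H. Qed.

Lemma sm3_d1 g : smooth3 g -> smooth3 (d1 g).
Proof. intros H k. destruct (H (S k)) as [_ [_ [H1 _]]]. exact H1. Qed.
Lemma sm3_d2 g : smooth3 g -> smooth3 (d2 g).
Proof. intros H k. destruct (H (S k)) as [_ [_ [_ [H1 _]]]]. exact H1. Qed.
Lemma sm3_d3 g : smooth3 g -> smooth3 (d3 g).
Proof. intros H k. destruct (H (S k)) as [_ [_ [_ [_ H1]]]]. exact H1. Qed.
Lemma sm2_dx f : smooth2 f -> smooth2 (dx2 f).
Proof. intros H k. exact (Ck2_dx _ _ (H (S k))). Qed.
Lemma sm2_dt f : smooth2 f -> smooth2 (dt2 f).
Proof. intros H k. exact (Ck2_dt _ _ (H (S k))). Qed.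
Lemma sm2_exd f : smooth2 f -> exd2 f.
Proof. intros H. exact (Ck2_exd _ _ (H 1%nat)). Qed.
Lemma sm2_add F G : smooth2 F -> smooth2 G -> smooth2 (Fadd F G).
Proof. intros HF HG k. apply Ck2_add; auto. Qed.
Lemma sm2_sub F G : smooth2 F -> smooth2 G -> smooth2 (Fsub F G).
Proof. intros HF HG k. apply Ck2_sub; auto. Qed.
Lemma sm2_mul F G : smooth2 F -> smooth2 G -> smooth2 (Fmul F G).
Proof. intros HF HG k. apply Ck2_mul; auto. Qed.
Lemma sm2_cst c : smooth2 (Fcst c).
Proof. intros k. apply Ck2_cst. Qed.

Lemma dx2_comp g u : smooth3 g -> exd2 u ->
  dx2 (Fcomp g u) = Fadd (Fcomp (d1 g) u) (Fmul (Fcomp (d3 g) u) (dx2 u)).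
Proof.
  intros Hg Hu. unfold dx2, Fcomp, Fadd, Fmul.
  apply functional_extensionality; intro x; apply functional_extensionality; intro t.
  apply is_derive_unique.
  apply (chain2 (fun y w => g y t w) (fun y => u y t) x).
  - intros a b. exact (proj1 (Ck3_exd 0 g (Hg 1%nat) a t b)).
  - exact (proj2 (proj2 (Ck3_exd 0 g (Hg 1%nat) x t (u x t)))).
  - exact (cont3_slice_t (d1 g) t x (u x t) (Ck3_cont 0 _ (sm3_d1 g Hg 0%nat))).
  - apply Derive_correct. exact (proj1 (Hu x t)).
Qed.

Lemma dt2_comp g u : smooth3 g -> exd2 u ->
  dt2 (Fcomp g u) = Fadd (Fcomp (d2 g) u) (Fmul (Fcomp (d3 g) u) (dt2 u)).
Proof.
  intros Hg Hu. unfold dt2, Fcomp, Fadd, Fmul.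
  apply functional_extensionality; intro x; apply functional_extensionality; intro t.
  apply is_derive_unique.
  apply (chain2 (fun s w => g x s w) (fun s => u x s) t).
  - intros a b. exact (proj1 (proj2 (Ck3_exd 0 g (Hg 1%nat) x a b))).
  - exact (proj2 (proj2 (Ck3_exd 0 g (Hg 1%nat) x t (u x t)))).
  - exact (cont3_slice_x (d2 g) x t (u x t) (Ck3_cont 0 _ (sm3_d2 g Hg 0%nat))).
  - apply Derive_correct. exact (proj2 (Hu x t)).
Qed.

Lemma Ck2_comp u (Hu : smooth2 u) k : forall g, smooth3 g -> Ck2 k (Fcomp g u).
Proof.
  induction k; intros g Hg.
  - intros x t. apply cont3_comp. exact (Ck3_cont 0 _ (Hg 0%nat)).
    exact (Ck2_cont 0 _ (Hu 0%nat) x t).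
  - split.
    + intros x t. apply cont3_comp. exact (Ck3_cont 0 _ (Hg 0%nat)).
      exact (Ck2_cont 0 _ (Hu 0%nat) x t).
    + split.
      * intros x t.
        split.
        -- exists (dx2 (Fcomp g u) x t).
           rewrite (dx2_comp g u Hg (sm2_exd u Hu)).
           unfold Fadd, Fmul, Fcomp.
           apply (chain2 (fun y w => g y t w) (fun y => u y t) x).
           ++ intros a b. exact (proj1 (Ck3_exd 0 g (Hg 1%nat) a t b)).
           ++ exact (proj2 (proj2 (Ck3_exd 0 g (Hg 1%nat) x t (u x t)))).
           ++ exact (cont3_slice_t (d1 g) t x (u x t) (Ck3_cont 0 _ (sm3_d1 g Hg 0%nat))).
           ++ apply Derive_correct. exact (proj1 (sm2_exd u Hu x t)).
        -- exists (dt2 (Fcomp g u) x t).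
           rewrite (dt2_comp g u Hg (sm2_exd u Hu)).
           unfold Fadd, Fmul, Fcomp.
           apply (chain2 (fun s w => g x s w) (fun s => u x s) t).
           ++ intros a b. exact (proj1 (proj2 (Ck3_exd 0 g (Hg 1%nat) x a b))).
           ++ exact (proj2 (proj2 (Ck3_exd 0 g (Hg 1%nat) x t (u x t)))).
           ++ exact (cont3_slice_x (d2 g) x t (u x t) (Ck3_cont 0 _ (sm3_d2 g Hg 0%nat))).
           ++ apply Derive_correct. exact (proj2 (sm2_exd u Hu x t)).
      * rewrite (dx2_comp g u Hg (sm2_exd u Hu)), (dt2_comp g u Hg (sm2_exd u Hu)).
        split; apply Ck2_add.
        -- apply IHk. apply sm3_d1; auto.
        -- apply Ck2_mul. apply IHk. apply sm3_d3; auto. apply (Ck2_dx _ _ (Hu (S k))).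
        -- apply IHk. apply sm3_d2; auto.
        -- apply Ck2_mul. apply IHk. apply sm3_d3; auto. apply (Ck2_dt _ _ (Hu (S k))).
Qed.

Lemma sm2_comp g u : smooth3 g -> smooth2 u -> smooth2 (Fcomp g u).
Proof. intros Hg Hu k. apply Ck2_comp; auto. Qed.


Lemma schwarz_gen (F : R -> R -> R) x y :
  (forall u v, ex_derive (fun z => F z v) u /\ ex_derive (fun z => F u z) v /\
     ex_derive (fun z => Derive (fun t => F z t) v) u /\
     ex_derive (fun z => Derive (fun t => F t z) u) v) ->
  continuous (fun p : R*R => Derive (fun z => Derive (fun t => F z t) (snd p)) (fst p)) (x, y) ->
  continuous (fun p : R*R => Derive (fun z => Derive (fun t => F t z) (fst p)) (snd p)) (x, y) ->
  Derive (fun z => Derive (fun t => F z t) y) x = Derive (fun z => Derive (fun t => F t z) x) y.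
Proof.
  intros H C1 C2.
  apply Schwarz.
  - exists (mkposreal 1 Rlt_0_1). intros u v _ _. apply H.
  - apply continuity_2d_pt_filterlim. exact C1.
  - apply continuity_2d_pt_filterlim. exact C2.
Qed.

Lemma schwarz2 f : smooth2 f -> dt2 (dx2 f) = dx2 (dt2 f).
Proof.
  intros Hf. apply functional_extensionality; intro x; apply functional_extensionality; intro y.
  symmetry. unfold dx2, dt2.
  apply (schwarz_gen f x y).
  - intros u v. repeat split.
    + exact (proj1 (sm2_exd f Hf u v)).
    + exact (proj2 (sm2_exd f Hf u v)).
    + exact (proj1 (sm2_exd _ (sm2_dt f Hf) u v)).
    + exact (proj2 (sm2_exd _ (sm2_dx f Hf) u v)).
  - exact (Ck2_cont 0 _ (sm2_dx _ (sm2_dt f Hf) 0%nat) x y).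
  - exact (Ck2_cont 0 _ (sm2_dt _ (sm2_dx f Hf) 0%nat) x y).
Qed.

Lemma schwarz12 f : smooth3 f -> d2 (d1 f) = d1 (d2 f).
Proof.
  intros Hf. apply functional_extensionality; intro x; apply functional_extensionality; intro t;
  apply functional_extensionality; intro u.
  symmetry. unfold d1, d2.
  apply (schwarz_gen (fun y s => f y s u) x t).
  - intros a b. repeat split.
    + exact (proj1 (Ck3_exd 0 f (Hf 1%nat) a b u)).
    + exact (proj1 (proj2 (Ck3_exd 0 f (Hf 1%nat) a b u))).
    + exact (proj1 (Ck3_exd 0 _ (sm3_d2 f Hf 1%nat) a b u)).
    + exact (proj1 (proj2 (Ck3_exd 0 _ (sm3_d1 f Hf 1%nat) a b u))).
  - exact (cont3_slice_u _ u x t (Ck3_cont 0 _ (sm3_d1 _ (sm3_d2 f Hf) 0%nat))).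
  - exact (cont3_slice_u _ u x t (Ck3_cont 0 _ (sm3_d2 _ (sm3_d1 f Hf) 0%nat))).
Qed.

Lemma schwarz13 f : smooth3 f -> d3 (d1 f) = d1 (d3 f).
Proof.
  intros Hf. apply functional_extensionality; intro x; apply functional_extensionality; intro t;
  apply functional_extensionality; intro u.
  symmetry. unfold d1, d3.
  apply (schwarz_gen (fun y w => f y t w) x u).
  - intros a b. repeat split.
    + exact (proj1 (Ck3_exd 0 f (Hf 1%nat) a t b)).
    + exact (proj2 (proj2 (Ck3_exd 0 f (Hf 1%nat) a t b))).
    + exact (proj1 (Ck3_exd 0 _ (sm3_d3 f Hf 1%nat) a t b)).
    + exact (proj2 (proj2 (Ck3_exd 0 _ (sm3_d1 f Hf 1%nat) a t b))).
  - exact (cont3_slice_t _ t x u (Ck3_cont 0 _ (sm3_d1 _ (sm3_d3 f Hf) 0%nat))).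
  - exact (cont3_slice_t _ t x u (Ck3_cont 0 _ (sm3_d3 _ (sm3_d1 f Hf) 0%nat))).
Qed.

Lemma schwarz23 f : smooth3 f -> d3 (d2 f) = d2 (d3 f).
Proof.
  intros Hf. apply functional_extensionality; intro x; apply functional_extensionality; intro t;
  apply functional_extensionality; intro u.
  symmetry. unfold d2, d3.
  apply (schwarz_gen (fun s w => f x s w) t u).
  - intros a b. repeat split.
    + exact (proj1 (proj2 (Ck3_exd 0 f (Hf 1%nat) x a b))).
    + exact (proj2 (proj2 (Ck3_exd 0 f (Hf 1%nat) x a b))).
    + exact (proj1 (proj2 (Ck3_exd 0 _ (sm3_d3 f Hf 1%nat) x a b))).
    + exact (proj2 (proj2 (Ck3_exd 0 _ (sm3_d2 f Hf 1%nat) x a b))).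
  - exact (cont3_slice_x _ x t u (Ck3_cont 0 _ (sm3_d2 _ (sm3_d3 f Hf) 0%nat))).
  - exact (cont3_slice_x _ x t u (Ck3_cont 0 _ (sm3_d3 _ (sm3_d2 f Hf) 0%nat))).
Qed.


Lemma dJ_HR a x t J i j :
  dJ (HR a) x t J i j =
  if andb (Nat.eqb i 0) (Nat.eqb j 1) then 1 - a * J 1%nat 0%nat
  else if andb (Nat.eqb i 2) (Nat.eqb j 1) then -1
  else if andb (Nat.eqb i 1) (Nat.eqb j 0) then a * (1 - J 0%nat 1%nat)
  else 0.
Proof.
  unfold dJ, HR, updJ.
  destruct i as [|[|[|i]]]; destruct j as [|[|j]]; simpl;
  first [ apply Derive_const
        | apply is_derive_unique; auto_derive; auto; ring ].
Qed.

Lemma prolong3_HR a xi eta phi u x t :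
  prolong3 xi eta phi (HR a) u x t =
    prol_coef xi eta phi u 0 1 x t * (1 - a * jet2 u x t 1%nat 0%nat)
  - prol_coef xi eta phi u 2 1 x t
  + prol_coef xi eta phi u 1 0 x t * (a * (1 - jet2 u x t 0%nat 1%nat)).
Proof.
  unfold prolong3.
  repeat (rewrite sum_Sn || rewrite sum_O).
  rewrite !dJ_HR. unfold HR. rewrite !Derive_const. simpl.
  unfold plus; simpl. ring.
Qed.

Lemma charQ_eq xi eta phi u :
  charQ xi eta phi u = Fsub (Fsub (Fcomp phi u) (Fmul (Fcomp xi u) (dx2 u))) (Fmul (Fcomp eta u) (dt2 u)).
Proof. reflexivity. Qed.

Global Hint Resolve sm2_add sm2_sub sm2_mul sm2_comp sm2_dx sm2_dt sm3_d1 sm3_d2 sm3_d3 sm2_exd sm2_cst : sm.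
Global Hint Rewrite dx2_add dx2_sub dx2_mul dx2_comp dt2_add dt2_sub dt2_mul dt2_comp dx2_cst dt2_cst
  using (auto 40 with sm) : pushd.
Global Hint Rewrite schwarz2 schwarz12 schwarz13 schwarz23 using (auto 40 with sm) : schw.

Definition EXPR a (xi eta phi : R -> R -> R -> R) (u : R -> R -> R) x t : R :=
  - (d3 eta x t (u x t))*(dt2 u x t)*(dx2 u x t)*a + 2*(d3 eta x t (u x t))*(dt2 u x t)*(dx2 (dx2 (dt2 u)) x t) - (d3 eta x t (u x t))*(dt2 u x t)*(dt2 u x t) + 2*(d3 eta x t (u x t))*(dt2 u x t)*(dt2 u x t)*(dx2 u x t)*a + (d3 eta x t (u x t))*(dt2 (dt2 u) x t)*(dx2 (dx2 u) x t) + 2*(d3 eta x t (u x t))*(dx2 u x t)*(dx2 (dt2 (dt2 u)) x t) + 2*(d3 eta x t (u x t))*(dx2 (dt2 u) x t)*(dx2 (dt2 u) x t) + 4*(d3 (d3 eta) x t (u x t))*(dt2 u x t)*(dx2 u x t)*(dx2 (dt2 u) x t) + (d3 (d3 eta) x t (u x t))*(dt2 u x t)*(dt2 u x t)*(dx2 (dx2 u) x t) + (d3 (d3 eta) x t (u x t))*(dt2 (dt2 u) x t)*(dx2 u x t)*(dx2 u x t) + (d3 (d3 (d3 eta)) x t (u x t))*(dt2 u x t)*(dt2 u x t)*(dx2 u x t)*(dx2 u x t) - (d2 eta x t (u x t))*(dt2 u x t) + (d2 eta x t (u x t))*(dt2 u x t)*(dx2 u x t)*a + (d2 eta x t (u x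 t))*(dx2 (dx2 (dt2 u)) x t) + (d2 (d3 eta) x t (u x t))*(dt2 u x t)*(dx2 (dx2 u) x t) + 2*(d2 (d3 eta) x t (u x t))*(dx2 u x t)*(dx2 (dt2 u) x t) + (d2 (d3 (d3 eta)) x t (u x t))*(dt2 u x t)*(dx2 u x t)*(dx2 u x t) - (d1 eta x t (u x t))*(dt2 u x t)*a + (d1 eta x t (u x t))*(dt2 u x t)*(dt2 u x t)*a + 2*(d1 eta x t (u x t))*(dx2 (dt2 (dt2 u)) x t) + 4*(d1 (d3 eta) x t (u x t))*(dt2 u x t)*(dx2 (dt2 u) x t) + 2*(d1 (d3 eta) x t (u x t))*(dt2 (dt2 u) x t)*(dx2 u x t) + 2*(d1 (d3 (d3 eta)) x t (u x t))*(dt2 u x t)*(dt2 u x t)*(dx2 u x t) + 2*(d1 (d2 eta) x t (u x t))*(dx2 (dt2 u) x t) + 2*(d1 (d2 (d3 eta)) x t (u x t))*(dt2 u x t)*(dx2 u x t) + (d1 (d1 eta) x t (u x t))*(dt2 (dt2 u) x t) + (d1 (d1 (d3 eta)) x t (u x t))*(dt2 u x t)*(dt2 u x t) + (d1 (d1 (d2 eta)) x t (u x t))*(dt2 u x t) + (d3 phi x t (u x t))*(dt2 u x t) - 2*(d3 phi x t (u x t))*(dt2 u x t)*(dx2 u x t)*a + (d3 phi x t (u x t))*(dx2 u x t)*a - (d3 phi x t (u x t))*(dx2 (dx2 (dt2 u)) x t) - (d3 (d3 phi) x t (u x t))*(dt2 u x t)*(dx2 (dx2 u) x t) - 2*(d3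 (d3 phi) x t (u x t))*(dx2 u x t)*(dx2 (dt2 u) x t) - (d3 (d3 (d3 phi)) x t (u x t))*(dt2 u x t)*(dx2 u x t)*(dx2 u x t) - (d2 phi x t (u x t))*(dx2 u x t)*a + (d2 phi x t (u x t)) - (d2 (d3 phi) x t (u x t))*(dx2 (dx2 u) x t) - (d2 (d3 (d3 phi)) x t (u x t))*(dx2 u x t)*(dx2 u x t) - (d1 phi x t (u x t))*(dt2 u x t)*a + (d1 phi x t (u x t))*a - 2*(d1 (d3 phi) x t (u x t))*(dx2 (dt2 u) x t) - 2*(d1 (d3 (d3 phi)) x t (u x t))*(dt2 u x t)*(dx2 u x t) - 2*(d1 (d2 (d3 phi)) x t (u x t))*(dx2 u x t) - (d1 (d1 (d3 phi)) x t (u x t))*(dt2 u x t) - (d1 (d1 (d2 phi)) x t (u x t)) - (d3 xi x t (u x t))*(dt2 u x t)*(dx2 u x t) + 2*(d3 xi x t (u x t))*(dt2 u x t)*(dx2 u x t)*(dx2 u x t)*a + (d3 xi x t (u x t))*(dt2 u x t)*(dx2 (dx2 (dx2 u)) x t) + 3*(d3 xi x t (u x t))*(dx2 u x t)*(dx2 (dx2 (dt2 u)) x t) - (d3 xi x t (u x t))*(dx2 u x t)*(dx2 u x t)*a + 3*(d3 xi x t (u x t))*(dx2 (dt2 u) x t)*(dx2 (dx2 u) x t) + 3*(d3 (d3 xi) x t (u x t))*(dt2 u x t)*(dx2 u x t)*(dx2 (dx2 u) x t) + 3*(d3 (d3 xi) x t (u x t))*(dx2 u x t)*(dx2 u x t)*(dx2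 (dt2 u) x t) + (d3 (d3 (d3 xi)) x t (u x t))*(dt2 u x t)*(dx2 u x t)*(dx2 u x t)*(dx2 u x t) - (d2 xi x t (u x t))*(dx2 u x t) + (d2 xi x t (u x t))*(dx2 u x t)*(dx2 u x t)*a + (d2 xi x t (u x t))*(dx2 (dx2 (dx2 u)) x t) + 3*(d2 (d3 xi) x t (u x t))*(dx2 u x t)*(dx2 (dx2 u) x t) + (d2 (d3 (d3 xi)) x t (u x t))*(dx2 u x t)*(dx2 u x t)*(dx2 u x t) + (d1 xi x t (u x t))*(dt2 u x t)*(dx2 u x t)*a - (d1 xi x t (u x t))*(dx2 u x t)*a + 2*(d1 xi x t (u x t))*(dx2 (dx2 (dt2 u)) x t) + 2*(d1 (d3 xi) x t (u x t))*(dt2 u x t)*(dx2 (dx2 u) x t) + 4*(d1 (d3 xi) x t (u x t))*(dx2 u x t)*(dx2 (dt2 u) x t) + 2*(d1 (d3 (d3 xi)) x t (u x t))*(dt2 u x t)*(dx2 u x t)*(dx2 u x t) + 2*(d1 (d2 xi) x t (u x t))*(dx2 (dx2 u) x t) + 2*(d1 (d2 (d3 xi)) x t (u x t))*(dx2 u x t)*(dx2 u x t) + (d1 (d1 xi) x t (u x t))*(dx2 (dt2 u) x t) + (d1 (d1 (d3 xi)) x t (u x t))*(dt2 u x t)*(dx2 u x t) + (d1 (d1 (d2 xi)) x t (u x t))*(dx2 u x t).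

Lemma expand a xi eta phi u x t (Hxi : smooth3 xi) (Heta : smooth3 eta) (Hphi : smooth3 phi) (Hu : smooth2 u) :
  prolong3 xi eta phi (HR a) u x t = EXPR a xi eta phi u x t.
Proof.
  rewrite prolong3_HR. unfold prol_coef, jet2. unfold Nat.iter; cbn [nat_rect]. rewrite charQ_eq.
  autorewrite with pushd.
  autorewrite with schw.
  unfold EXPR, Fadd, Fsub, Fmul, Fcomp, Fcst.
  ring.
Qed.


Definition poly3 (x0 t0 c00 c10 c01 c20 c11 c02 c30 c21 c12 c03 : R) : R -> R -> R :=
  fun x t => c00 + c10 * (x - x0) + c01 * (t - t0) + c20 / 2 * ((x - x0) * (x - x0))
    + c11 * ((x - x0) * (t - t0)) + c02 / 2 * ((t - t0) * (t - t0))
    + c30 / 6 * ((x - x0) * (x - x0) * (x - x0)) + c21 / 2 * ((x - x0) * (x - x0) * (t - t0))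
    + c12 / 2 * ((x - x0) * (t - t0) * (t - t0)) + c03 / 6 * ((t - t0) * (t - t0) * (t - t0)).

Lemma dx2_poly3 x0 t0 c00 c10 c01 c20 c11 c02 c30 c21 c12 c03 :
  dx2 (poly3 x0 t0 c00 c10 c01 c20 c11 c02 c30 c21 c12 c03) =
  poly3 x0 t0 c10 c20 c11 c30 c21 c12 0 0 0 0.
Proof.
  unfold dx2. apply functional_extensionality; intro x; apply functional_extensionality; intro t.
  apply is_derive_unique. unfold poly3. auto_derive; auto. field.
Qed.
Lemma dt2_poly3 x0 t0 c00 c10 c01 c20 c11 c02 c30 c21 c12 c03 :
  dt2 (poly3 x0 t0 c00 c10 c01 c20 c11 c02 c30 c21 c12 c03) =
  poly3 x0 t0 c01 c11 c02 c21 c12 c03 0 0 0 0.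
Proof.
  unfold dt2. apply functional_extensionality; intro x; apply functional_extensionality; intro t.
  apply is_derive_unique. unfold poly3. auto_derive; auto. field.
Qed.
Lemma poly3_at x0 t0 c00 c10 c01 c20 c11 c02 c30 c21 c12 c03 :
  poly3 x0 t0 c00 c10 c01 c20 c11 c02 c30 c21 c12 c03 x0 t0 = c00.
Proof. unfold poly3. ring. Qed.

Lemma cR_plus (f g : R*R -> R) p : continuous f p -> continuous g p -> continuous (fun q => f q + g q) p.
Proof. intros; apply (continuous_plus f g); auto. Qed.
Lemma cR_minus (f g : R*R -> R) p : continuous f p -> continuous g p -> continuous (fun q => f q - g q) p.
Proof. intros; apply (continuous_minus f g); auto. Qed.
Lemma cR_mult (f g : R*R -> R) p : continuous f p -> continuous g p -> continuous (fun q => f q * g q) p.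
Proof. intros; apply (continuous_mult f g); auto. Qed.
Lemma cR_const (c : R) (p : R*R) : continuous (fun _ : R*R => c) p.
Proof. apply continuous_const. Qed.
Lemma cR_fst (p : R*R) : continuous (fun q : R*R => fst q) p.
Proof. destruct p; apply continuous_fst. Qed.
Lemma cR_snd (p : R*R) : continuous (fun q : R*R => snd q) p.
Proof. destruct p; apply continuous_snd. Qed.

Ltac ctac := match goal with
 | |- continuous (fun q => @?f q + @?g q) _ => apply (cR_plus f g)
 | |- continuous (fun q => @?f q - @?g q) _ => apply (cR_minus f g)
 | |- continuous (fun q => @?f q * @?g q) _ => apply (cR_mult f g)
 | |- continuous (fun q => fst q) _ => apply cR_fst
 | |- continuous (fun q => snd q) _ => apply cR_snd
 | |- continuous (fun q => ?c) _ => apply cR_const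
 end.

Lemma Ck2_poly3 x0 t0 k : forall c00 c10 c01 c20 c11 c02 c30 c21 c12 c03,
  Ck2 k (poly3 x0 t0 c00 c10 c01 c20 c11 c02 c30 c21 c12 c03).
Proof.
  assert (HC : forall c00 c10 c01 c20 c11 c02 c30 c21 c12 c03,
            cont2 (poly3 x0 t0 c00 c10 c01 c20 c11 c02 c30 c21 c12 c03)).
  { intros. intros x t. unfold poly3.
    unfold Rdiv. repeat ctac. }
  induction k; intros.
  - apply HC.
  - split; [apply HC|]. split.
    + intros x t; split; unfold poly3; auto_derive; auto.
    + rewrite dx2_poly3, dt2_poly3. split; apply IHk.
Qed.
Lemma sm2_poly3 x0 t0 c00 c10 c01 c20 c11 c02 c30 c21 c12 c03 :
  smooth2 (poly3 x0 t0 c00 c10 c01 c20 c11 c02 c30 c21 c12 c03).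
Proof. intro k. apply Ck2_poly3. Qed.

Global Hint Rewrite dx2_poly3 dt2_poly3 poly3_at : polyd.


Lemma lin1 (g : R -> R) k : (forall y, is_derive g y k) -> forall y, g y = g 0 + k * y.
Proof.
  intros H y.
  assert (D : forall c, Rabs (c - 0) <= Rabs y -> is_derive (fun z => g z - k * z) c ((fun _ => 0) c)).
  { intros c _. replace ((fun _ : R => 0) c) with (k - k * 1) by (simpl; ring).
    apply (is_derive_minus g (fun z => k * z)). apply H.
    apply (is_derive_scal (fun z => z)). apply is_derive_Reals. apply derivable_pt_lim_id. }
  assert (Hy : Rabs (y - 0) <= Rabs y) by (rewrite Rminus_0_r; apply Rle_refl).
  destruct (MVT_cor4 (fun z => g z - k * z) (fun _ => 0) 0 (Rabs y) D y Hy) as [c [Hc _]].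
  lra.
Qed.

Lemma affine3 f k1 k2 k3 : smooth3 f ->
  (forall x t u, d1 f x t u = k1) -> (forall x t u, d2 f x t u = k2) -> (forall x t u, d3 f x t u = k3) ->
  forall x t u, f x t u = f 0 0 0 + k1 * x + k2 * t + k3 * u.
Proof.
  intros Hf H1 H2 H3 x t u.
  assert (A3 : f x t u = f x t 0 + k3 * u).
  { apply (lin1 (fun w => f x t w)). intro y. rewrite <- (H3 x t y).
    apply Derive_correct. exact (proj2 (proj2 (Ck3_exd 0 f (Hf 1%nat) x t y))). }
  assert (A2 : f x t 0 = f x 0 0 + k2 * t).
  { apply (lin1 (fun s => f x s 0)). intro y. rewrite <- (H2 x y 0).
    apply Derive_correct. exact (proj1 (proj2 (Ck3_exd 0 f (Hf 1%nat) x y 0))). }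
  assert (A1 : f x 0 0 = f 0 0 0 + k1 * x).
  { apply (lin1 (fun z => f z 0 0)). intro y. rewrite <- (H1 y 0 0).
    apply Derive_correct. exact (proj1 (Ck3_exd 0 f (Hf 1%nat) y 0 0)). }
  lra.
Qed.

Section OnlyIf.
Variables (a : R) (xi eta phi : R -> R -> R -> R).
Hypotheses (Ha : a <> 0) (Hxi : smooth3 xi) (Heta : smooth3 eta) (Hphi : smooth3 phi)
  (Hsym : is_symmetry3 (HR a) xi eta phi).

Lemma key x0 t0 u0 p q r s w e f :
  EXPR a xi eta phi (poly3 x0 t0 u0 p q r s w e (q + a * p * (1 - q)) f 0) x0 t0 = 0.
Proof.
  rewrite <- expand; auto using sm2_poly3.
  apply Hsym. apply sm2_poly3.
  unfold HR, jet2. unfold Nat.iter; cbn [nat_rect].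
  autorewrite with polyd. ring.
Qed.

Ltac getkey x0 t0 u0 p q r s w e f H :=
  pose proof (key x0 t0 u0 p q r s w e f) as H;
  unfold EXPR in H; autorewrite with polyd in H.

Ltac getdiff x t u a1 b1 c1 d1' e1 f1 g1 a0 b0 c0 d0 e0 f0 g0 H :=
  let H1 := fresh in let H0 := fresh in
  getkey x t u a1 b1 c1 d1' e1 f1 g1 H1;
  getkey x t u a0 b0 c0 d0 e0 f0 g0 H0;
  assert (H := f_equal2 Rminus H1 H0); clear H0 H1; ring_simplify in H.

Lemma stepA x t u : d2 xi x t u = 0 /\ d3 xi x t u = 0 /\ d1 eta x t u = 0 /\ d3 eta x t u = 0.
Proof.
  getdiff x t u 0 0 0 0 0 1 0  0 0 0 0 0 0 0 HA1.
  getdiff x t u 0 1 0 0 0 1 0  0 1 0 0 0 0 0 HA2.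
  getdiff x t u 0 0 0 0 0 0 1  0 0 0 0 0 0 0 HA3.
  getdiff x t u 1 0 0 0 0 0 1  1 0 0 0 0 0 0 HA4.
  repeat split; lra.
Qed.

Lemma Zd1 f : (forall x t u, f x t u = 0) -> forall x t u, d1 f x t u = 0.
Proof. intros H x t u. unfold d1. rewrite (Derive_ext _ (fun _ => 0)) by auto. apply Derive_const. Qed.
Lemma Zd2 f : (forall x t u, f x t u = 0) -> forall x t u, d2 f x t u = 0.
Proof. intros H x t u. unfold d2. rewrite (Derive_ext _ (fun _ => 0)) by auto. apply Derive_const. Qed.
Lemma Zd3 f : (forall x t u, f x t u = 0) -> forall x t u, d3 f x t u = 0.
Proof. intros H x t u. unfold d3. rewrite (Derive_ext _ (fun _ => 0)) by auto. apply Derive_const. Qed.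

Lemma zxi2 : forall x t u, d2 xi x t u = 0. Proof. intros; apply stepA. Qed.
Lemma zxi3 : forall x t u, d3 xi x t u = 0. Proof. intros; apply stepA. Qed.
Lemma zeta1 : forall x t u, d1 eta x t u = 0. Proof. intros; apply stepA. Qed.
Lemma zeta3 : forall x t u, d3 eta x t u = 0. Proof. intros; apply stepA. Qed.
Lemma zeta110 : forall x t u, d1 (d2 eta) x t u = 0.
Proof. intros. rewrite <- (schwarz12 eta Heta). apply Zd2, zeta1. Qed.

Ltac kill H :=
  rewrite ?zxi2, ?zxi3, ?zeta1, ?zeta3, ?zeta110,
    ?(Zd1 _ zxi2), ?(Zd1 _ zxi3), ?(Zd2 _ zxi3), ?(Zd3 _ zxi3),
    ?(Zd1 _ zeta3), ?(Zd2 _ zeta3), ?(Zd3 _ zeta3), ?(Zd1 _ zeta110),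
    ?(Zd1 _ (Zd1 _ zxi2)), ?(Zd1 _ (Zd2 _ zxi3)), ?(Zd2 _ (Zd3 _ zxi3)),
    ?(Zd1 _ (Zd1 _ zxi3)), ?(Zd1 _ (Zd3 _ zxi3)), ?(Zd3 _ (Zd3 _ zxi3)),
    ?(Zd1 _ (Zd1 _ zeta3)), ?(Zd1 _ (Zd2 _ zeta3)), ?(Zd1 _ (Zd3 _ zeta3)),
    ?(Zd2 _ (Zd3 _ zeta3)), ?(Zd3 _ (Zd3 _ zeta3)) in H.

Lemma stepC x t u : d1 (d1 xi) x t u = 2 * d1 (d3 phi) x t u /\ d3 (d3 phi) x t u = 0 /\ d2 (d3 phi) x t u = 0.
Proof.
  getdiff x t u 0 0 0 1 0 0 0  0 0 0 0 0 0 0 HC1.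
  getdiff x t u 1 0 0 1 0 0 0  1 0 0 0 0 0 0 HC2.
  getdiff x t u 0 0 1 0 0 0 0  0 0 0 0 0 0 0 HC3.
  kill HC1. kill HC2. kill HC3.
  repeat split; lra.
Qed.

Lemma zphi002 : forall x t u, d3 (d3 phi) x t u = 0. Proof. intros; apply stepC. Qed.
Lemma zphi011 : forall x t u, d2 (d3 phi) x t u = 0. Proof. intros; apply stepC. Qed.

Ltac kill2 H := kill H;
  rewrite ?zphi002, ?zphi011, ?(Zd1 _ zphi011), ?(Zd2 _ zphi002), ?(Zd1 _ zphi002), ?(Zd3 _ zphi002) in H.

Lemma stepD x t u :
  d3 phi x t u = - d1 xi x t u /\
  d2 phi x t u = d2 eta x t u + d1 xi x t u /\
  - a * d1 phi x t u - d1 (d1 (d3 phi)) x t u + 2 * d1 xi x t u = 0 /\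
  d2 phi x t u + a * d1 phi x t u - d1 (d1 (d2 phi)) x t u = 0.
Proof.
  getkey x t u 0 0 0 0 0 0 0 H00. kill2 H00.
  getdiff x t u 1 0 0 0 0 0 0  0 0 0 0 0 0 0 Hp. kill2 Hp.
  getdiff x t u 0 1 0 0 0 0 0  0 0 0 0 0 0 0 Hq. kill2 Hq.
  getdiff x t u 1 1 0 0 0 0 0  1 0 0 0 0 0 0 Hpq1.
  getdiff x t u 0 1 0 0 0 0 0  0 0 0 0 0 0 0 Hpq0.
  assert (Hpq := f_equal2 Rminus Hpq1 Hpq0); clear Hpq1 Hpq0; ring_simplify in Hpq. kill2 Hpq.
  assert (E1 : a * (d3 phi x t u + d1 xi x t u) = 0) by lra.
  assert (E2 : a * (d2 eta x t u - d2 phi x t u + d1 xi x t u) = 0) by lra.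
  apply Rmult_integral in E1; apply Rmult_integral in E2.
  destruct E1 as [E1|E1]; [contradiction|]. destruct E2 as [E2|E2]; [contradiction|].
  repeat split; lra.
Qed.

Lemma zxi11 : forall x t u, d1 (d1 xi) x t u = 0.
Proof.
  intros x t u.
  assert (E : d1 (d3 phi) x t u = - d1 (d1 xi) x t u).
  { unfold d1 at 1. rewrite (Derive_ext _ (fun y => - d1 xi y t u)) by (intros; apply stepD).
    rewrite Derive_opp. reflexivity. }
  destruct (stepC x t u) as [C _]. lra.
Qed.

Lemma zphi13 : forall x t u, d1 (d3 phi) x t u = 0.
Proof.
  intros x t u. unfold d1 at 1.
  rewrite (Derive_ext _ (fun y => - d1 xi y t u)) by (intros; apply stepD).
  rewrite Derive_opp. transitivity (- d1 (d1 xi) x t u); [reflexivity|].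
  rewrite zxi11. ring.
Qed.

Lemma zphi12 : forall x t u, d1 (d2 phi) x t u = 0.
Proof.
  intros x t u. unfold d1 at 1.
  rewrite (Derive_ext _ (fun y => d2 eta y t u + d1 xi y t u)) by (intros; apply stepD).
  rewrite (Derive_plus (fun y => d2 eta y t u) (fun y => d1 xi y t u)).
  - transitivity (d1 (d2 eta) x t u + d1 (d1 xi) x t u); [reflexivity|].
    rewrite zeta110, zxi11. ring.
  - exact (proj1 (Ck3_exd 0 _ (sm3_d2 eta Heta 1%nat) x t u)).
  - exact (proj1 (Ck3_exd 0 _ (sm3_d1 xi Hxi 1%nat) x t u)).
Qed.

Lemma onlyif_main : exists c1 c2 c3 c4 : R, forall x t u : R,
         xi x t u = - x / 3 * c1 + c3 /\
         eta x t u = c1 * t + c2 /\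
         phi x t u = (2 * t / 3 + u / 3 - 2 * x / (3 * a)) * c1 + c4.
Proof.
  set (al := d1 xi 0 0 0).
  assert (Hal : forall x t u, d1 xi x t u = al).
  { intros x t u. rewrite (affine3 (d1 xi) 0 0 0 (sm3_d1 xi Hxi)).
    - unfold al. ring.
    - apply zxi11.
    - intros. rewrite (schwarz12 xi Hxi). apply Zd1, zxi2.
    - intros. rewrite (schwarz13 xi Hxi). apply Zd1, zxi3. }
  assert (P1 : forall x t u, d1 phi x t u = 2 * al / a).
  { intros x t u. destruct (stepD x t u) as [_ [_ [D3 _]]].
    rewrite (Zd1 _ zphi13), Hal in D3. field_simplify_eq; auto. lra. }
  assert (P2 : forall x t u, d2 phi x t u = - 2 * al).
  { intros x t u. destruct (stepD x t u) as [_ [_ [_ D4]]].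
    rewrite (Zd1 _ zphi12), P1 in D4. field_simplify in D4; auto. lra. }
  assert (P3 : forall x t u, d3 phi x t u = - al).
  { intros x t u. destruct (stepD x t u) as [D1 _]. rewrite Hal in D1. exact D1. }
  assert (Q2 : forall x t u, d2 eta x t u = - 3 * al).
  { intros x t u. destruct (stepD x t u) as [_ [D2 _]]. rewrite P2, Hal in D2. lra. }
  exists (-3 * al), (eta 0 0 0), (xi 0 0 0), (phi 0 0 0).
  intros x t u. split; [|split].
  - rewrite (affine3 xi al 0 0 Hxi Hal zxi2 zxi3). field.
  - rewrite (affine3 eta 0 (-3 * al) 0 Heta zeta1 Q2 zeta3). ring.
  - rewrite (affine3 phi (2 * al / a) (-2 * al) (- al) Hphi P1 P2 P3). field. auto.
Qed.
End OnlyIf.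


Definition aff3 (k0 k1 k2 k3 : R) : R -> R -> R -> R := fun x t u => k0 + k1 * x + k2 * t + k3 * u.
Lemma d1_aff3 k0 k1 k2 k3 : d1 (aff3 k0 k1 k2 k3) = aff3 k1 0 0 0.
Proof. unfold d1, aff3. do 3 (apply functional_extensionality; intro).
  apply is_derive_unique. auto_derive; auto. ring. Qed.
Lemma d2_aff3 k0 k1 k2 k3 : d2 (aff3 k0 k1 k2 k3) = aff3 k2 0 0 0.
Proof. unfold d2, aff3. do 3 (apply functional_extensionality; intro).
  apply is_derive_unique. auto_derive; auto. ring. Qed.
Lemma d3_aff3 k0 k1 k2 k3 : d3 (aff3 k0 k1 k2 k3) = aff3 k3 0 0 0.
Proof. unfold d3, aff3. do 3 (apply functional_extensionality; intro).
  apply is_derive_unique. auto_derive; auto. ring. Qed.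

Lemma if_dir a xi eta phi c1 c2 c3 c4 : a <> 0 ->
  smooth3 xi -> smooth3 eta -> smooth3 phi ->
  (forall x t u : R,
         xi x t u = - x / 3 * c1 + c3 /\
         eta x t u = c1 * t + c2 /\
         phi x t u = (2 * t / 3 + u / 3 - 2 * x / (3 * a)) * c1 + c4) ->
  is_symmetry3 (HR a) xi eta phi.
Proof.
  intros Ha Hxi Heta Hphi H u Hu x t _.
  rewrite expand; auto.
  assert (Exi : xi = aff3 c3 (- c1 / 3) 0 0).
  { do 3 (apply functional_extensionality; intro). rewrite (proj1 (H _ _ _)). unfold aff3. field. }
  assert (Eeta : eta = aff3 c2 0 c1 0).
  { do 3 (apply functional_extensionality; intro). rewrite (proj1 (proj2 (H _ _ _))). unfold aff3. ring. }
  assert (Ephi : phi = aff3 c4 (- 2 * c1 / (3 * a)) (2 * c1 / 3) (c1 / 3)).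
  { do 3 (apply functional_extensionality; intro). rewrite (proj2 (proj2 (H _ _ _))). unfold aff3. field. auto. }
  unfold EXPR. rewrite Exi, Eeta, Ephi.
  repeat (rewrite d1_aff3 || rewrite d2_aff3 || rewrite d3_aff3). unfold aff3.
  field. auto.
Qed.

Theorem mainTheorem1 :
  forall (a : R), a <> 0 ->
  forall xi eta phi : R -> R -> R -> R,
    smooth3 xi -> smooth3 eta -> smooth3 phi ->
    (is_symmetry3 (HR a) xi eta phi <->
       exists c1 c2 c3 c4 : R, forall x t u : R,
         xi x t u = - x / 3 * c1 + c3 /\
         eta x t u = c1 * t + c2 /\
         phi x t u = (2 * t / 3 + u / 3 - 2 * x / (3 * a)) * c1 + c4) /\
    (is_symmetry3 (HR a) xi eta phi <->
       exists k1 k2 k3 k4 : R, forall x t u : R,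
         xi x t u = k1 * vxi v1 x t u + k2 * vxi v2 x t u
                    + k3 * vxi (v3 a) x t u + k4 * vxi (v4 a) x t u /\
         eta x t u = k1 * veta v1 x t u + k2 * veta v2 x t u
                    + k3 * veta (v3 a) x t u + k4 * veta (v4 a) x t u /\
         phi x t u = k1 * vphi v1 x t u + k2 * vphi v2 x t u
                    + k3 * vphi (v3 a) x t u + k4 * vphi (v4 a) x t u).
Proof.
  intros a Ha xi eta phi Hxi Heta Hphi.
  assert (E1 : is_symmetry3 (HR a) xi eta phi <->
       exists c1 c2 c3 c4 : R, forall x t u : R,
         xi x t u = - x / 3 * c1 + c3 /\
         eta x t u = c1 * t + c2 /\
         phi x t u = (2 * t / 3 + u / 3 - 2 * x / (3 * a)) * c1 + c4).
  { split.
    - intro Hs. apply onlyif_main; auto.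
    - intros [c1 [c2 [c3 [c4 H]]]]. apply (if_dir a xi eta phi c1 c2 c3 c4); auto. }
  split; [exact E1|].
  rewrite E1. unfold vxi, veta, vphi, v1, v2, v3, v4; simpl.
  split.
  - intros [c1 [c2 [c3 [c4 H]]]].
    exists c3, c2, (a * c4), (c1 / 3). intros x t u. destruct (H x t u) as [H1 [H2 H3]].
    repeat split; [rewrite H1 | rewrite H2 | rewrite H3]; field; auto.
  - intros [k1 [k2 [k3 [k4 H]]]].
    exists (3 * k4), k2, k1, (k3 / a). intros x t u. destruct (H x t u) as [H1 [H2 H3]].
    repeat split; [rewrite H1 | rewrite H2 | rewrite H3]; field; auto.
Qed.
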